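(* Let $G$ be a connected solvable Lie group, $U=\mathbb C^n$, and let $\rho:G\to GL(n,\mathbb C)$ be a representation of $G$ on $U$. Then any complex linear subspace $V\subset U$ which is universal in $U$ is equal to $U$.
   Context: $V$ is universal in $U$ if for every $u\in U$ there exists $g\in G$ with $\rho(g)u\in V$. *)

(* Defs.v *)
From HB Require Import structures.
From mathcomp Require Import all_boot all_order all_algebra.
From mathcomp Require Import all_classical all_reals topology normedtype.
From mathcomp Require Import complex.

Set Implicit Arguments.
Unset Strict Implicit.
Unset Printing Implicit Defensive.

Import Order.TTheory GRing.Theory Num.Theory.
Import numFieldNormedType.Exports.
Local Open Scope classical_set_scope.
Local Open Scope ring_scope.

Record topgroup (G : topologicalType) := TopGroup {
  tg_mul : G -> G -> G;
  tg_inv : G -> G;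
  tg_one : G;
  tg_mulA : forall x y z, tg_mul x (tg_mul y z) = tg_mul (tg_mul x y) z;
  tg_mul1g : forall x, tg_mul tg_one x = x;
  tg_mulg1 : forall x, tg_mul x tg_one = x;
  tg_mulVg : forall x, tg_mul (tg_inv x) x = tg_one;
  tg_mulgV : forall x, tg_mul x (tg_inv x) = tg_one;
  tg_mul_cont : continuous (fun p : G * G => tg_mul p.1 p.2);
  tg_inv_cont : continuous tg_inv
}.

Definition is_subgroup (G : topologicalType) (gr : topgroup G) (H : set G) :=
  [/\ H (tg_one gr),
      forall x y, H x -> H y -> H (tg_mul gr x y)
    & forall x, H x -> H (tg_inv gr x)].

(* Solvability (as an abstract group): there is a subnormal series
   G = H_0 >= H_1 >= ... >= H_k = {1} of subgroups such that every
   commutator of elements of H_i lies in H_(i+1) (i.e. H_(i+1) is normal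
   in H_i with abelian quotient). *)
Definition solvable_group (G : topologicalType) (gr : topgroup G) :=
  exists (k : nat) (H : nat -> set G),
    [/\ H 0%N = setT, H k = [set tg_one gr],
        forall i, is_subgroup gr (H i),
        forall i, (i < k)%N -> H i.+1 `<=` H i
      & forall i, (i < k)%N -> forall x y, H i x -> H i y ->
          H i.+1 (tg_mul gr (tg_mul gr x y)
                            (tg_mul gr (tg_inv gr x) (tg_inv gr y)))].

Definition representation (R : realType) (G : topologicalType)
  (gr : topgroup G) (n : nat) (rho : G -> 'M[R[i]]_n) :=
  [/\ forall g, rho g \in unitmx,
      rho (tg_one gr) = 1%:M,
      forall g h, rho (tg_mul gr g h) = rho g *m rho h
    & forall i j, continuous ((fun g => complex.Re (rho g i j)) : G -> R) /\
                  continuous ((fun g => complex.Im (rho g i j)) : G -> R)].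

(* Action of rho g on a vector u of C^n, vectors written as row vectors:
   (rho g) u  corresponds to  u *m (rho g)^T. *)
Definition act (R : realType) (n : nat) (A : 'M[R[i]]_n) (u : 'rV[R[i]]_n) :=
  u *m A^T.

(* V (a subspace of C^n given as the row space of a matrix) is universal
   in U = C^n: every u in U can be moved into V by some rho g. *)
Definition universal (R : realType) (G : topologicalType) (n : nat)
  (rho : G -> 'M[R[i]]_n) (V : 'M[R[i]]_n) :=
  forall u : 'rV[R[i]]_n, exists g : G, (act (rho g) u <= V)%MS.

(* Main.v *)
Require Import Defs.
From HB Require Import structures.
From mathcomp Require Import all_boot all_order all_algebra.
From mathcomp Require Import all_classical all_reals topology normedtype.
From mathcomp Require Import complex.
From mathcomp Require Import lra.
Set Implicit Arguments.
Unset Strict Implicit.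
Unset Printing Implicit Defensive.
Import Order.TTheory GRing.Theory Num.Theory.
Import numFieldNormedType.Exports.
Section Grp.
Local Open Scope classical_set_scope.
Variables (G : topologicalType) (gr : topgroup G).
Local Notation m := (tg_mul gr).
Local Notation iv := (tg_inv gr).
Local Notation e := (tg_one gr).

Lemma g_inv_uniq x y : m x y = e -> y = iv x.
Proof.
move=> h; rewrite -(tg_mul1g gr y) -(tg_mulVg gr x) -tg_mulA h tg_mulg1 //.
Qed.
Lemma g_invK x : iv (iv x) = x.
Proof. by apply/esym/g_inv_uniq; rewrite tg_mulVg. Qed.
Lemma g_inv1 : iv e = e.
Proof. by apply/esym/g_inv_uniq; rewrite tg_mul1g. Qed.
Lemma g_invM x y : iv (m x y) = m (iv y) (iv x).
Proof.
apply/esym/g_inv_uniq; rewrite -tg_mulA [m y _]tg_mulA tg_mulgV tg_mul1g.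
exact: tg_mulgV.
Qed.

Definition gcomm x y := m (m x y) (m (iv x) (iv y)).
Definition gconj a g := m (m g a) (iv g).

Lemma g_mulVK x g : m (m x (iv g)) g = x.
Proof. by rewrite -tg_mulA tg_mulVg tg_mulg1. Qed.
Lemma g_mulKV x g : m (m x g) (iv g) = x.
Proof. by rewrite -tg_mulA tg_mulgV tg_mulg1. Qed.
Lemma gconjM a b g : gconj (m a b) g = m (gconj a g) (gconj b g).
Proof. by rewrite /gconj !tg_mulA g_mulVK. Qed.
Lemma gconjV a g : gconj (iv a) g = iv (gconj a g).
Proof. by rewrite /gconj !g_invM g_invK tg_mulA. Qed.
Lemma gconj_comm x y g : gconj (gcomm x y) g = gcomm (gconj x g) (gconj y g).
Proof. by rewrite /gcomm !gconjM !gconjV. Qed.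
Lemma gcomm11 : gcomm e e = e.
Proof. by rewrite /gcomm g_inv1 !tg_mul1g. Qed.
Lemma gcommx1 x : gcomm x e = e.
Proof. by rewrite /gcomm g_inv1 !tg_mulg1 tg_mulgV. Qed.
Lemma gcomm_y x y : m (gcomm x y) y = m (m x y) (iv x).
Proof. by rewrite /gcomm -!tg_mulA tg_mulVg tg_mulg1. Qed.
Lemma gcomm_yx x y : m (m (gcomm x y) y) x = m x y.
Proof. by rewrite gcomm_y -tg_mulA tg_mulVg tg_mulg1. Qed.

Fixpoint Pw (S : set G) (k : nat) : set G :=
  match k with
  | 0 => [set e]
  | k.+1 => fun g => exists x y z, [/\ S x, S y, Pw S k z & g = m (gcomm x y) z]
  end.
Definition Dnext (S : set G) : set G := fun g => exists k, Pw S k g.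
Fixpoint Dser (i : nat) : set G :=
  match i with 0 => setT | i.+1 => Dnext (Dser i) end.

Lemma Dser_one i : Dser i e.
Proof. by case: i => //= i; exists 0%N. Qed.

Lemma Dser_comm i x y : Dser i x -> Dser i y -> Dser i.+1 (gcomm x y).
Proof.
move=> hx hy; exists 1%N; exists x, y, e; split => //.
by rewrite tg_mulg1.
Qed.

Lemma Dser_conj i a g : Dser i a -> Dser i (gconj a g).
Proof.
elim: i a => [//|i IH] a /= [k hk]; exists k.
elim: k a hk => [|k IHk] a /=; first by move=> ->; rewrite /gconj tg_mulg1 tg_mulgV.
move=> [x [y [z [hx hy hz ->]]]].
exists (gconj x g), (gconj y g), (gconj z g); split; [exact: IH|exact: IH|exact: IHk|].
by rewrite gconjM gconj_comm.
Qed.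

Lemma mul_cont (f h : G -> G) : continuous f -> continuous h ->
  continuous (fun x => m (f x) (h x)).
Proof.
move=> cf ch x; apply: (@continuous2_cvg _ _ _ _ _ _ f h (tg_mul gr)); [|exact: cf|exact: ch].
exact: (@tg_mul_cont _ gr (f x, h x)).
Qed.
Lemma inv_cont (f : G -> G) : continuous f -> continuous (fun x => iv (f x)).
Proof. by move=> cf x; apply: continuous_comp; [exact: cf|exact: tg_inv_cont]. Qed.
Lemma cst_cont (c : G) : continuous (fun _ : G => c).
Proof. exact: cst_continuous. Qed.
Lemma id_cont : continuous (fun x : G => x).
Proof. by move=> x. Qed.

Lemma conn_image (A : set G) (f : G -> G) : connected A -> continuous f ->
  connected (f @` A).
Proof. by move=> cA cf; apply: connected_continuous_connected => //; exact: continuous_subspaceT. Qed.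

Lemma Dnext_conn (S : set G) : connected S -> S e -> connected (Dnext S).
Proof.
move=> cS Se.
pose Cm := fun g => exists x y, [/\ S x, S y & g = gcomm x y].
have Ce : Cm e by exists e, e; rewrite gcomm11.
have cC : connected Cm.
  have -> : Cm = \bigcup_(x in S) ((fun y => gcomm x y) @` S).
    apply/seteqP; split=> g.
      by move=> [x [y [hx hy ->]]]; exists x => //; exists y.
    by move=> [x hx [y hy <-]]; exists x, y.
  apply: bigcup_connected; first by exists e => x hx; exists e => //; rewrite gcommx1.
  move=> x _; apply: conn_image => //; rewrite /gcomm.
  by apply: mul_cont; apply: mul_cont; auto using cst_cont, id_cont, inv_cont.
have PwC k : connected (Pw S k) /\ Pw S k e.
  elim: k => [|k [IH1 IH2]]; first by split=> //; exact: connected1.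
  have eq : Pw S k.+1 = \bigcup_(z in Pw S k) (((fun c => m c z) @` Cm) `|` Pw S k).
    apply/seteqP; split=> g.
      move=> [x [y [z [hx hy hz ->]]]]; exists z => //; left; exists (gcomm x y) => //.
      by exists x, y.
    move=> [z hz [[c [x [y [hx hy ->]]] <-]|hg]]; first by exists x, y, z.
    by exists e, e, g; rewrite gcomm11 tg_mul1g.
  split; last by exists e, e, e; rewrite gcomm11 tg_mul1g.
  rewrite eq; apply: bigcup_connected; first by exists e => z _; right.
  move=> z hz; apply: connectedU.
  - by exists z; split => //; exists e => //; rewrite tg_mul1g.
  - by apply: conn_image => //; apply: mul_cont; [exact: id_cont|exact: cst_cont].
  - exact: IH1.
have -> : Dnext S = \bigcup_(k in setT) Pw S k.
  by apply/seteqP; split=> g [k]; [move=> h; exists k|move=> _ h; exists k].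
apply: bigcup_connected; first by exists e => k _; case: (PwC k).
by move=> k _; case: (PwC k).
Qed.

Lemma Dser_conn i : connected (@setT G) -> connected (Dser i).
Proof.
move=> cG; elim: i => [//|i IH] /=; apply: Dnext_conn => //; exact: Dser_one.
Qed.

End Grp.
Section CC.
Local Open Scope classical_set_scope.
Local Open Scope ring_scope.
Variables (R : realType) (G : topologicalType).

Definition ccont (f : G -> R[i]) :=
  continuous (fun g => complex.Re (f g)) /\ continuous (fun g => complex.Im (f g)).

Lemma rcontD (f h : G -> R) : continuous f -> continuous h -> continuous (fun x => f x + h x).
Proof. by move=> cf ch x; exact: (cvgD (cf x) (ch x)). Qed.
Lemma rcontM (f h : G -> R) : continuous f -> continuous h -> continuous (fun x => f x * h x).
Proof. by move=> cf ch x; exact: (cvgM (cf x) (ch x)). Qed.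
Lemma rcontN (f : G -> R) : continuous f -> continuous (fun x => - f x).
Proof. by move=> cf x; exact: (cvgN (cf x)). Qed.

Lemma ccont_cst c : ccont (fun _ => c).
Proof. by split; apply: cst_continuous. Qed.
Lemma ccontD f h : ccont f -> ccont h -> ccont (fun x => f x + h x).
Proof.
move=> [f1 f2] [h1 h2]; split.
  have -> : (fun x => complex.Re (f x + h x)) = (fun x => complex.Re (f x) + complex.Re (h x)).
    by apply: funext => x; case: (f x) => ? ?; case: (h x).
  exact: rcontD.
have -> : (fun x => complex.Im (f x + h x)) = (fun x => complex.Im (f x) + complex.Im (h x)).
  by apply: funext => x; case: (f x) => ? ?; case: (h x).
exact: rcontD.
Qed.
Lemma ccontM f h : ccont f -> ccont h -> ccont (fun x => f x * h x).
Proof.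
move=> [f1 f2] [h1 h2]; split.
  have -> : (fun x => complex.Re (f x * h x)) = (fun x => complex.Re (f x) * complex.Re (h x) + - (complex.Im (f x) * complex.Im (h x))).
    by apply: funext => x; case: (f x) => ? ?; case: (h x).
  by apply: rcontD; [|apply: rcontN]; apply: rcontM.
have -> : (fun x => complex.Im (f x * h x)) = (fun x => complex.Re (f x) * complex.Im (h x) + complex.Im (f x) * complex.Re (h x)).
  by apply: funext => x; case: (f x) => ? ?; case: (h x).
by apply: rcontD; apply: rcontM.
Qed.
Lemma ccont_sum (I : Type) (r : seq I) (P : pred I) (F : I -> G -> R[i]) :
  (forall i, ccont (F i)) -> ccont (fun x => \sum_(i <- r | P i) F i x).
Proof.
move=> hF; elim: r => [|a r IH].
  have -> : (fun x => \sum_(i <- [::] | P i) F i x) = (fun _ => 0).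
    by apply: funext => x; rewrite big_nil.
  exact: ccont_cst.
have -> : (fun x => \sum_(i <- a :: r | P i) F i x) =
   (fun x => if P a then F a x + \sum_(i <- r | P i) F i x else \sum_(i <- r | P i) F i x).
  by apply: funext => x; rewrite big_cons.
case: (P a) => //; exact: ccontD.
Qed.
Lemma ccont_comp (f : G -> R[i]) (h : G -> G) : ccont f -> continuous h -> ccont (fun x => f (h x)).
Proof.
move=> [f1 f2] ch; split => x.
  exact: (continuous_comp (ch x) (f1 (h x))).
exact: (continuous_comp (ch x) (f2 (h x))).
Qed.

Definition mcont p q (M : G -> 'M[R[i]]_(p, q)) := forall i j, ccont (fun g => M g i j).

Lemma mcont_cst p q (A : 'M[R[i]]_(p, q)) : mcont (fun _ => A).
Proof. by move=> i j; exact: ccont_cst. Qed.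
Lemma mcont_mul p q r (A : G -> 'M[R[i]]_(p, q)) (B : G -> 'M[R[i]]_(q, r)) :
  mcont A -> mcont B -> mcont (fun g => A g *m B g).
Proof.
move=> cA cB i j.
have -> : (fun g => (A g *m B g) i j) = (fun g => \sum_k A g i k * B g k j).
  by apply: funext => g; rewrite mxE.
by apply: ccont_sum => k; apply: ccontM.
Qed.
Lemma mcont_tr p q (A : G -> 'M[R[i]]_(p, q)) : mcont A -> mcont (fun g => (A g)^T).
Proof.
move=> cA i j; have -> : (fun g => (A g)^T i j) = (fun g => A g j i).
  by apply: funext => g; rewrite mxE.
exact: cA.
Qed.
Lemma mcont_comp p q (A : G -> 'M[R[i]]_(p, q)) (h : G -> G) :
  mcont A -> continuous h -> mcont (fun g => A (h g)).
Proof. by move=> cA ch i j; have := ccont_comp (cA i j) ch. Qed.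

Lemma avoid_seq (s : seq R) (r1 r2 : R) : r1 < r2 ->
  exists t, [/\ r1 < t, t < r2 & t \notin s].
Proof.
elim: s r1 r2 => [|x s IH] r1 r2 lt12.
  by exists ((r1 + r2) / 2); split => //; lra.
have [xle|xgt] := lerP x ((r1 + r2) / 2).
  have [|t [h1 h2 h3]] := IH ((r1 + r2) / 2) r2; first by lra.
  exists t; split => //; first by lra.
  by rewrite in_cons negb_or h3 andbT; apply/eqP => ht; lra.
have [|t [h1 h2 h3]] := IH r1 ((r1 + r2) / 2); first by lra.
exists t; split => //; first by lra.
by rewrite in_cons negb_or h3 andbT; apply/eqP => ht; lra.
Qed.

Lemma real_const (A : set G) (h : G -> R) (s : seq R) a0 :
  connected A -> continuous h -> A a0 -> (forall x, A x -> h x \in s) ->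
  forall x, A x -> h x = h a0.
Proof.
move=> cA ch Aa0 hs.
have cI : connected (h @` A).
  by apply: connected_continuous_connected => //; exact: continuous_subspaceT.
have /connected_intervalP iI := cI.
have key x y : A x -> A y -> ~ (h x < h y).
  move=> Ax Ay lt; have [t [t1 t2 t3]] := avoid_seq s lt.
  have : (h @` A) t.
    apply: (iI (h x) (h y)); [by exists x|by exists y|by rewrite !ltW].
  by move=> [z Az hz]; move: t3; rewrite -hz hs.
move=> x Ax; apply/eqP; rewrite eq_le !leNgt; apply/andP; split; apply/negP.
  exact: key.
exact: key.
Qed.

Lemma finite_const (A : set G) (f : G -> R[i]) (s : seq R[i]) a0 :
  connected A -> ccont f -> A a0 -> (forall x, A x -> f x \in s) ->
  forall x, A x -> f x = f a0.
Proof.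
move=> cA [c1 c2] Aa0 hs x Ax.
have h1 := @real_const A _ (map (@complex.Re R) s) a0 cA c1 Aa0.
have h2 := @real_const A _ (map (@complex.Im R) s) a0 cA c2 Aa0.
have e1 := h1 (fun y Ay => map_f _ (hs y Ay)) x Ax.
have e2 := h2 (fun y Ay => map_f _ (hs y Ay)) x Ax.
move: e1 e2; case: (f x) => a b; case: (f a0) => c d /= -> -> //.
Qed.

End CC.
Section LA.
Local Open Scope ring_scope.
Variable F : closedFieldType.

Lemma inv_vec n p (E : 'M[F]_(p, n)) (M : 'M[F]_n) :
  (forall v : 'rV_n, (v <= E)%MS -> (v *m M <= E)%MS) -> (E *m M <= E)%MS.
Proof.
move=> h; apply/rV_subP => v /submxP [u ->]; rewrite mulmxA; apply: h.
exact: submxMl.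
Qed.

Lemma nz_vec n (v : 'rV[F]_n) : v != 0 -> exists j, v 0 j != 0.
Proof.
move=> nz; apply/not_existsP => hall; move/negP: nz; apply; apply/eqP/rowP => j.
rewrite mxE; apply/eqP; apply/negPn/negP => h; exact: (hall j).
Qed.

Lemma eig_in n (W M : 'M[F]_n) : W != 0 -> (W *m M <= W)%MS ->
  exists v : 'rV_n, [/\ (v <= W)%MS, v != 0 & exists mu, v *m M = mu *: v].
Proof.
move=> Wnz stab.
have [mu hmu] : exists mu, eigenvalue (restrict W M) mu.
  have /closed_rootP [x hx] : size (char_poly (restrict W M)) != 1%N.
    by rewrite size_char_poly eqSS mxrank_eq0.
  by exists x; rewrite eigenvalue_root_char.
move/eigenvalueP: hmu => [x hx xnz].
have : (x <= eigenspace (restrict W M) mu)%MS by apply/eigenspaceP.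
rewrite eigenspace_restrict // => /eigenspaceP hv.
exists (x *m row_base W); split.
- by rewrite (submx_trans (submxMl _ _)) // eq_row_base.
- by rewrite mul_mx_rowfree_eq0 ?row_base_free.
- by exists mu.
Qed.

Lemma commfam n (I : Type) (P : I -> Prop) (f : I -> 'M[F]_n) (W : 'M_n) :
  W != 0 -> (forall a, P a -> (W *m f a <= W)%MS) ->
  (forall a b, P a -> P b -> forall w : 'rV_n, (w <= W)%MS ->
      w *m f a *m f b = w *m f b *m f a) ->
  exists w : 'rV_n, [/\ (w <= W)%MS, w != 0 &
     forall a, P a -> exists lam, w *m f a = lam *: w].
Proof.
move: {2}(\rank W) (leqnn (\rank W)) => r.
elim: r W => [|r IH] W.
  by rewrite leqn0 mxrank_eq0 => /eqP -> /eqP.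
move=> rW Wnz stab comm.
case: (pselect (exists a, P a /\ ~ exists lam, forall w : 'rV_n, (w <= W)%MS -> w *m f a = lam *: w)).
  move=> [a [Pa nsc]].
  have [v [vW vnz [mu hmu]]] := eig_in Wnz (stab a Pa).
  pose E := (W :&: kermx (f a - mu%:M))%MS.
  have vE : (v <= E)%MS.
    by rewrite /E sub_capmx vW sub_kermx mulmxBr hmu mul_mx_scalar subrr eqxx.
  have EW : (E <= W)%MS by exact: capmxSl.
  have Enz : E != 0.
    by apply/eqP => E0; move/eqP: vnz; apply; apply/eqP; rewrite -submx0 -E0.
  have rE : (\rank E <= r)%N.
    have [le eqv] := mxrank_leqif_sup EW; case: (boolP (W <= E)%MS) => WE.
      case: nsc; exists mu => w wW.
      have : (w <= E)%MS by exact: submx_trans WE.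
      rewrite /E.
      rewrite sub_capmx sub_kermx mulmxBr mul_mx_scalar subr_eq0 => /andP [_ /eqP //].
    have lt : (\rank E < \rank W)%N by rewrite ltn_neqAle le andbT eqv.
    by rewrite -ltnS (leq_trans lt).
  have stabE : forall b, P b -> (E *m f b <= E)%MS.
    move=> b Pb; apply: inv_vec => u uE.
    have uW : (u <= W)%MS by exact: submx_trans EW.
    move: uE; rewrite /E !sub_capmx sub_kermx => /andP [_ /eqP hu].
    rewrite (submx_trans (submxMr _ uW)) ?stab //= sub_kermx.
    have hu' : u *m f a = mu *: u.
      by apply/eqP; rewrite -subr_eq0 -mul_mx_scalar -mulmxBr hu.
    by rewrite mulmxBr mul_mx_scalar -(comm a b) // hu' -scalemxAl subrr.
  have commE : forall b c, P b -> P c -> forall u : 'rV_n, (u <= E)%MS ->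
      u *m f b *m f c = u *m f c *m f b.
    by move=> b c Pb Pc u uE; apply: comm => //; exact: submx_trans EW.
  have [w [wE wnz hw]] := IH E rE Enz stabE commE.
  by exists w; split => //; exact: submx_trans EW.
move=> nex.
exists (nz_row W); split; [exact: nz_row_sub|by rewrite nz_row_eq0|].
move=> a Pa.
case: (pselect (exists lam, forall w : 'rV_n, (w <= W)%MS -> w *m f a = lam *: w)).
  by move=> [lam hl]; exists lam; apply: hl; exact: nz_row_sub.
by move=> h; case: nex; exists a.
Qed.

End LA.
Local Open Scope ring_scope.
Lemma scal_inj (F : fieldType) n (v : 'rV[F]_n) (a b : F) :
  v != 0 -> a *: v = b *: v -> a = b.
Proof.
move=> vnz /eqP; rewrite -subr_eq0 -scalerBl scaler_eq0 (negbTE vnz) orbF subr_eq0.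
by move/eqP.
Qed.

Lemma irr_exists (F : fieldType) (I : Type) n (f : I -> 'M[F]_n) (X : 'M_n) :
  X != 0 -> (forall g, (X *m f g <= X)%MS) ->
  exists W0 : 'M_n, [/\ (W0 <= X)%MS, W0 != 0, (forall g, (W0 *m f g <= W0)%MS) &
    forall Y : 'M_n, (Y <= W0)%MS -> Y != 0 -> (forall g, (Y *m f g <= Y)%MS) -> (W0 <= Y)%MS].
Proof.
move: {2}(\rank X) (leqnn (\rank X)) => r.
elim: r X => [|r IH] X.
  by rewrite leqn0 mxrank_eq0 => /eqP -> /eqP.
move=> rX Xnz stab.
case: (pselect (exists Y : 'M_n, [/\ (Y <= X)%MS, Y != 0, (forall g, (Y *m f g <= Y)%MS) & ~~ (X <= Y)%MS])).
  move=> [Y [YX Ynz Ystab nXY]].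
  have [le eqv] := mxrank_leqif_sup YX.
  have lt : (\rank Y < \rank X)%N by rewrite ltn_neqAle le andbT eqv.
  have [|W0 [h1 h2 h3 h4]] := IH Y _ Ynz Ystab; first by rewrite -ltnS (leq_trans lt).
  by exists W0; split => //; exact: submx_trans YX.
move=> nex; exists X; split => // Y YX Ynz Ystab.
by apply/negPn/negP => h; apply: nex; exists Y.
Qed.

Section LK.
Local Open Scope classical_set_scope.
Local Open Scope ring_scope.
Variables (R : realType) (G : topologicalType) (gr : topgroup G) (n : nat).
Local Notation m := (tg_mul gr).
Local Notation iv := (tg_inv gr).
Local Notation e := (tg_one gr).
Local Notation D := (Dser gr).
Hypothesis Gconn : connected (@setT G).
Variable k : nat.
Hypothesis Dk : forall i, (k <= i)%N -> forall x, D i x -> x = e.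
Variable sig : G -> 'M[R[i]]_n.
Variable W : 'M[R[i]]_n.
Hypothesis Hinv : forall g, (W *m sig g <= W)%MS.
Hypothesis Hmul : forall g h (w : 'rV_n), (w <= W)%MS ->
  w *m sig (m g h) = w *m sig h *m sig g.
Hypothesis Hone : forall w : 'rV_n, (w <= W)%MS -> w *m sig e = w.
Hypothesis Hcont : mcont sig.

Lemma vinv g (w : 'rV_n) : (w <= W)%MS -> (w *m sig g <= W)%MS.
Proof. by move=> h; exact: submx_trans (submxMr _ h) (Hinv g). Qed.
Lemma actVK g (w : 'rV_n) : (w <= W)%MS -> w *m sig (iv g) *m sig g = w.
Proof. by move=> h; rewrite -Hmul // tg_mulgV Hone. Qed.
Lemma actKV g (w : 'rV_n) : (w <= W)%MS -> w *m sig g *m sig (iv g) = w.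
Proof. by move=> h; rewrite -Hmul // tg_mulVg Hone. Qed.
Lemma act_nz g (w : 'rV_n) : (w <= W)%MS -> w != 0 -> w *m sig g != 0.
Proof.
move=> h nz; apply/eqP => h0; move/eqP: nz; apply.
by rewrite -(actKV g h) h0 mul0mx.
Qed.

Lemma eig_const (A : set G) a0 (M : G -> 'M[R[i]]_n) (N : 'M[R[i]]_n) (v : 'rV_n) :
  connected A -> A a0 -> mcont M -> v != 0 ->
  (forall g, A g -> exists lam, v *m M g = lam *: v /\ eigenvalue N lam) ->
  forall g, A g -> v *m M g = v *m M a0.
Proof.
move=> cA Aa0 cM vnz hyp.
have [j vj] := nz_vec vnz.
pose f g := (v *m M g) 0 j * (v 0 j)^-1.
have hf : forall g, A g -> v *m M g = f g *: v /\ eigenvalue N (f g).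
  move=> g Ag; have [lam [h1 h2]] := hyp g Ag.
  have -> : f g = lam by rewrite /f h1 mxE -mulrA mulfV // mulr1.
  by split.
have [s hs] := closed_field_poly_normal (char_poly N).
have cf : ccont f.
  apply: ccontM; last exact: ccont_cst.
  by apply: (@mcont_mul R G 1 n n (fun _ => v)) => //; exact: mcont_cst.
have fs : forall g, A g -> f g \in s.
  move=> g Ag; have [_ /[!eigenvalue_root_char]] := hf g Ag.
  rewrite hs rootZ ?root_prod_XsubC //.
  by rewrite lead_coef_eq0 -size_poly_eq0 size_char_poly.
move=> g Ag; rewrite (proj1 (hf g Ag)) (proj1 (hf a0 Aa0)).
by rewrite (finite_const cA cf Aa0 fs Ag).
Qed.

Section Irr.
Variable W0 : 'M[R[i]]_n.
Hypothesis W0W : (W0 <= W)%MS.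
Hypothesis W0nz : W0 != 0.
Hypothesis W0inv : forall g, (W0 *m sig g <= W0)%MS.
Hypothesis W0irr : forall Y : 'M_n, (Y <= W0)%MS -> Y != 0 ->
  (forall g, (Y *m sig g <= Y)%MS) -> (W0 <= Y)%MS.

Definition scal i := forall a, D i a -> exists c, forall w : 'rV_n, (w <= W0)%MS -> w *m sig a = c *: w.

Lemma sW (w : 'rV_n) : (w <= W0)%MS -> (w <= W)%MS.
Proof. by move=> h; exact: submx_trans W0W. Qed.
Lemma vinv0 g (w : 'rV_n) : (w <= W0)%MS -> (w *m sig g <= W0)%MS.
Proof. by move=> h; exact: submx_trans (submxMr _ h) (W0inv g). Qed.

Lemma step_comm i : scal i.+1 -> forall x y, D i x -> D i y ->
  forall w : 'rV_n, (w <= W0)%MS -> w *m sig x *m sig y = w *m sig y *m sig x.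
Proof.
move=> hs x y Dx Dy.
have [v [vW0 vnz [mu hmu]]] := eig_in W0nz (W0inv y).
have vW := sW vW0.
pose M x := sig (iv x) *m sig y *m sig x.
have hM : forall x, D i x -> forall c, (forall w : 'rV_n, (w <= W0)%MS -> w *m sig (gcomm gr x y) = c *: w) ->
    v *m M x = (c * mu) *: v.
  move=> x' Dx' c hc.
  rewrite /M !mulmxA -Hmul ?vinv // -Hmul // -gcomm_y Hmul // hmu -scalemxAl hc //.
  by rewrite scalerA mulrC.
have hc : forall x, D i x -> v *m M x = v *m M e.
  apply: (@eig_const (D i) e M (sig y) v (@Dser_conn _ gr i Gconn) (@Dser_one _ gr i)).
  - apply: mcont_mul; last exact: Hcont.
    apply: mcont_mul; last exact: mcont_cst.
    by apply: mcont_comp => //; apply: inv_cont; exact: id_cont.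
  - exact: vnz.
  move=> x' Dx'; have [c hc] := hs _ (Dser_comm Dx' Dy).
  exists (c * mu); split; first exact: hM.
  apply/eigenvalueP; exists (v *m sig (iv x')); last exact: act_nz.
  rewrite -[LHS](actKV x' (vinv _ (vinv _ vW))).
  have := hM x' Dx' c hc; rewrite /M !mulmxA => ->.
  by rewrite scalemxAl.
have hMe : v *m M e = mu *: v.
  by rewrite /M g_inv1 !mulmxA (Hone vW) hmu -scalemxAl (Hone vW).
have [c hcx] := hs _ (Dser_comm Dx Dy).
have c1 : c = 1.
  have := hc x Dx; rewrite hMe (hM x Dx c hcx) => /(scal_inj vnz) h.
  have mu0 : mu != 0.
    apply/eqP => mu0; move/eqP: vnz; apply.
    by rewrite -(actKV y vW) hmu mu0 scale0r mul0mx.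
  by apply: (mulIf mu0); rewrite h mul1r.
move=> w wW0.
apply/esym.
rewrite -(Hmul x y (sW wW0)) -(gcomm_yx gr x y) (Hmul (m (gcomm gr x y) y) x (sW wW0)).
rewrite (Hmul (gcomm gr x y) y (vinv x (sW wW0))).
by rewrite hcx ?vinv0 // c1 scale1r.
Qed.

Lemma step_scal i : scal i.+1 -> scal i.
Proof.
move=> hs.
have hcomm := step_comm hs.
have [w0 [w0W0 w0nz hw0]] := @commfam _ n G (D i) sig W0 W0nz (fun a _ => W0inv a)
  (fun a b Da Db w hw => hcomm a b Da Db w hw).
have w0W := sW w0W0.
have conjinv : forall a lam g, D i a -> w0 *m sig a = lam *: w0 ->
    w0 *m sig (m (m (iv g) a) g) = lam *: w0.
  move=> a lam g Da hl.
  pose M g := sig g *m sig a *m sig (iv g).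
  have eqM : forall g, w0 *m M g = w0 *m sig (m (m (iv g) a) g).
    by move=> g'; rewrite /M Hmul // Hmul ?vinv // !mulmxA.
  have Da' : forall g, D i (m (m (iv g) a) g).
    by move=> g'; have := Dser_conj (iv g') Da; rewrite /gconj g_invK.
  have := @eig_const setT e M (sig a) w0 Gconn I _ w0nz _ g I.
  rewrite eqM => ->.
  - by rewrite /M g_inv1 !mulmxA (Hone w0W) hl -scalemxAl (Hone w0W).
  - apply: mcont_mul; last by apply: mcont_comp => //; apply: inv_cont; exact: id_cont.
    by apply: mcont_mul => //; exact: mcont_cst.
  move=> g' _; have [lam' hl'] := hw0 _ (Da' g').
  exists lam'; split; first by rewrite eqM.
  apply/eigenvalueP; exists (w0 *m sig g'); last exact: act_nz.
  rewrite -[LHS](actVK g' (vinv _ (vinv _ w0W))).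
  have := eqM g'; rewrite /M !mulmxA => ->.
  by rewrite hl' scalemxAl.
pose purev (x : 'rV_n) := forall a lam, D i a -> w0 *m sig a = lam *: w0 ->
  x *m sig a = lam *: x.
have purev_conj : forall x g, (x <= W0)%MS -> purev x -> purev (x *m sig g).
  move=> x g xW0 px a lam Da hl.
  have e1 : m a g = m g (m (m (iv g) a) g).
    by rewrite !tg_mulA tg_mulgV tg_mul1g.
  rewrite -Hmul ?sW // e1 Hmul ?sW // (px _ lam) //.
    by rewrite scalemxAl.
  by have := Dser_conj (iv g) Da; rewrite /gconj g_invK.
  by apply: conjinv.
pose Pm := fun r => `[< exists X : 'M_n, [/\ (X <= W0)%MS,
    (forall x : 'rV_n, (x <= X)%MS -> purev x) & \rank X = r] >].
have ex0 : exists r, Pm r.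
  exists 0%N; apply/asboolP; exists 0; split => //; last by rewrite mxrank0.
    exact: sub0mx.
  move=> x; rewrite submx0 => /eqP -> a lam _ _; by rewrite mul0mx scaler0.
have ub : forall r, Pm r -> (r <= n)%N.
  by move=> r /asboolP [X [_ _ <-]]; exact: rank_leq_col.
case: (ex_maxnP ex0 ub) => r /asboolP [X [XW0 pX rX]] hmax.
have maxX : forall y : 'rV_n, (y <= W0)%MS -> purev y -> (y <= X)%MS.
  move=> y yW0 py.
  pose X' := (X + y)%MS.
  have pX' : forall x : 'rV_n, (x <= X')%MS -> purev x.
    move=> x /sub_addsmxP [[u1 u2] /= ->] a lam Da hl.
    rewrite mulmxDl -(mulmxA u2) (py a lam Da hl) -scalemxAr.
    by rewrite (pX _ (submxMl u1 X) a lam Da hl) scalerDr.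
  have X'W0 : (X' <= W0)%MS by rewrite addsmx_sub XW0.
  have rle : (\rank X' <= r)%N.
    by apply: hmax; apply/asboolP; exists X'.
  have [le eqv] := mxrank_leqif_sup (addsmxSl X y).
  have : (X' <= X)%MS.
    by rewrite -eqv eqn_leq le rX rle.
  by apply: submx_trans; exact: addsmxSr.
have Xinv : forall g, (X *m sig g <= X)%MS.
  move=> g; apply: inv_vec => x xX.
  have xW0 : (x <= W0)%MS by exact: submx_trans XW0.
  by apply: maxX; [exact: vinv0|apply: purev_conj => //; exact: pX].
have w0X : (w0 <= X)%MS by apply: maxX.
have Xnz : X != 0.
  by apply/eqP => X0; move/eqP: w0nz; apply; apply/eqP; rewrite -submx0 -X0.
have W0X := W0irr XW0 Xnz Xinv.
move=> a Da; have [lam hl] := hw0 a Da.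
exists lam => w wW0; apply: (pX w (submx_trans wW0 W0X) a lam Da hl).
Qed.

Lemma scal_all i : scal i.
Proof.
have base : forall i, (k <= i)%N -> scal i.
  move=> i' ki a Da; rewrite (Dk ki Da); exists 1 => w wW0.
  by rewrite Hone ?sW // scale1r.
suff : forall d i, (k <= i + d)%N -> scal i by move=> /(_ k i); apply; rewrite leq_addl.
elim=> [|d IH] i' h; first by apply: base; rewrite addn0 in h.
by apply: step_scal; apply: IH; rewrite addSnnS.
Qed.

Lemma common_eig : exists w : 'rV_n, [/\ (w <= W0)%MS, w != 0 &
  forall g, exists c, w *m sig g = c *: w].
Proof.
exists (nz_row W0); split; [exact: nz_row_sub|by rewrite nz_row_eq0|].
move=> g; have [c hc] := scal_all (I : D 0 g).
by exists c; apply: hc; exact: nz_row_sub.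
Qed.

End Irr.

Lemma LK_sub : W != 0 -> exists w : 'rV_n, [/\ (w <= W)%MS, w != 0 &
  forall g, exists c, w *m sig g = c *: w].
Proof.
move=> Wnz; have [W0 [W0W W0nz W0inv W0irr]] := irr_exists Wnz Hinv.
have [w [wW0 wnz hw]] := common_eig W0W W0nz W0inv W0irr.
by exists w; split => //; exact: submx_trans W0W.
Qed.

End LK.
Local Open Scope ring_scope.

Lemma submxB (F : fieldType) m1 m2 n (A B : 'M[F]_(m1, n)) (C : 'M_(m2, n)) :
  (A <= C)%MS -> (B <= C)%MS -> (A - B <= C)%MS.
Proof. by move=> hA hB; rewrite addmx_sub // eqmx_opp. Qed.

Lemma solv_Dk (G : topologicalType) (gr : topgroup G) : solvable_group gr ->
  exists k, forall i, (k <= i)%N -> forall x, Dser gr i x -> x = tg_one gr.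
Proof.
move=> [k [H [H0 Hk Hsub Hdec Hcomm]]]; exists k.
have c1 : forall i, (i <= k)%N -> forall x, Dser gr i x -> H i x.
  elim=> [|i IH] ik x /=; first by rewrite H0.
  move=> [j]; elim: j x => [|j IHj] x /=.
    by move=> ->; case: (Hsub i.+1).
  move=> [a [b [z [Da Db Pz ->]]]].
  case: (Hsub i.+1) => _ hm _; apply: hm; last exact: IHj.
  by apply: Hcomm => //; apply: IH => //; exact: ltnW.
have c2 : forall d x, Dser gr (k + d) x -> x = tg_one gr.
  elim=> [|d IH] x.
    by rewrite addn0 => /(c1 k (leqnn k)); rewrite Hk.
  rewrite addnS /= => [[j]]; elim: j x => [|j IHj] x /=; first by [].
  move=> [a [b [z [Da Db Pz ->]]]].
  by rewrite (IH a Da) (IH b Db) (IHj z Pz) gcomm11 tg_mul1g.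
move=> i ki x; rewrite -(subnKC ki); exact: c2.
Qed.

Section Main.
Local Open Scope classical_set_scope.
Variables (R : realType) (G : topologicalType) (gr : topgroup G) (n : nat).
Variable rho : G -> 'M[R[i]]_n.
Local Notation m := (tg_mul gr).
Local Notation iv := (tg_inv gr).
Local Notation e := (tg_one gr).
Hypothesis Gconn : connected (@setT G).
Variable k : nat.
Hypothesis Dk : forall i, (k <= i)%N -> forall x, Dser gr i x -> x = e.
Hypothesis rep : representation gr rho.

Local Notation T g := (rho g)^T.

Lemma TM g h : T (m g h) = T h *m T g.
Proof. by case: rep => _ _ hM _; rewrite hM trmx_mul. Qed.
Lemma T1 : T e = 1%:M.
Proof. by case: rep => _ h1 _ _; rewrite h1 trmx1. Qed.
Lemma TKV g : T g *m T (iv g) = 1%:M.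
Proof. by rewrite -TM tg_mulVg T1. Qed.
Lemma Tcont : mcont (fun g => T g).
Proof. by apply: mcont_tr; case: rep => _ _ _ hc i j; exact: hc. Qed.

Lemma LK_mod (K : 'M[R[i]]_n) : (forall g, (K *m T g <= K)%MS) -> ~~ (1%:M <= K)%MS ->
  exists y : 'rV_n, ~~ (y <= K)%MS /\ forall g, exists lam, (y *m T g - lam *: y <= K)%MS.
Proof.
move=> Kinv nK.
pose Q := cokermx K.
pose sig g := pinvmx Q *m T g *m Q.
have kq : forall g (y : 'rV_n), y *m Q *m sig g = y *m T g *m Q.
  move=> g y; pose y' := y *m Q *m pinvmx Q.
  have hy' : y' *m Q = y *m Q by rewrite mulmxKpV // submxMl.
  have dK : (y' - y <= K)%MS by rewrite submxE mulmxBl hy' subrr.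
  have dK' : ((y' - y) *m T g <= K)%MS by exact: submx_trans (submxMr _ dK) (Kinv g).
  move: dK'; rewrite submxE mulmxBl mulmxBl subr_eq0 => /eqP <-.
  by rewrite /sig /y' !mulmxA.
have Qnz : Q != 0.
  by apply: contra nK => /eqP Q0; rewrite submxE mul1mx -/Q Q0.
have Hinv : forall g, (Q *m sig g <= Q)%MS.
  by move=> g; rewrite /sig mulmxA submxMl.
have Hmul : forall g h (w : 'rV_n), (w <= Q)%MS -> w *m sig (m g h) = w *m sig h *m sig g.
  move=> g h w /submxP [u ->].
  by rewrite !kq TM (mulmxA u).
have Hone : forall w : 'rV_n, (w <= Q)%MS -> w *m sig e = w.
  by move=> w /submxP [u ->]; rewrite kq T1 mulmx1.
have Hc : mcont sig.
  apply: mcont_mul; last exact: mcont_cst.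
  apply: mcont_mul; first exact: mcont_cst.
  exact: Tcont.
have [v [vQ vnz hv]] := LK_sub Gconn Dk Hinv Hmul Hone Hc Qnz.
move/submxP: vQ => [u vu].
exists u; split.
  by rewrite submxE -/Q -vu.
move=> g; have [c hc] := hv g; exists c.
by rewrite submxE -/Q mulmxBl -scalemxAl -kq -vu hc subrr.
Qed.

End Main.

Theorem proposition5p1 (R : realType) (G : topologicalType) (gr : topgroup G)
  (n : nat) (rho : G -> 'M[R[i]]_n) (V : 'M[R[i]]_n) :
  connected (@setT G) ->
  solvable_group gr ->
  representation gr rho ->
  universal rho V ->
  (V == 1%:M)%MS.
Proof.
move=> Gconn hsolv rep hu.
have [k Dk] := solv_Dk hsolv.
have claim : forall d (K : 'M[R[i]]_n), (forall g, (K *m (rho g)^T <= K)%MS) ->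
    (K <= V)%MS -> (n - \rank K <= d)%N -> (1%:M <= V)%MS.
  elim=> [|d IH] K Kinv KV hd.
    apply: submx_trans KV; apply: submx_full; rewrite /row_full eqn_leq rank_leq_col /=.
    by rewrite -subn_eq0 -leqn0.
  case: (boolP (1%:M <= K)%MS) => [h|nK]; first exact: submx_trans h KV.
  have [y [ynK hy]] := LK_mod Gconn Dk rep Kinv nK.
  have [g hg] := hu y; rewrite /act in hg.
  have [lam hl] := hy g.
  have lamyV : (lam *: y <= V)%MS.
    have -> : lam *: y = y *m (rho g)^T - (y *m (rho g)^T - lam *: y) by rewrite opprB addrC subrK.
    by apply: submxB => //; exact: submx_trans KV.
  have lamnz : lam != 0.
    apply/eqP => lam0; move: hl; rewrite lam0 scale0r subr0 => hK.
    move/negP: ynK; apply.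
    have := submx_trans (submxMr ((rho (tg_inv gr g))^T) hK) (Kinv (tg_inv gr g)).
    by rewrite -mulmxA (TKV rep) mulmx1.
  have yV : (y <= V)%MS by move: lamyV; rewrite (eqmx_scale _ lamnz).
  pose K' := (K + y)%MS.
  have yT : forall h, (y *m (rho h)^T <= K')%MS.
    move=> h; have [l hl'] := hy h.
    have -> : y *m (rho h)^T = (y *m (rho h)^T - l *: y) + l *: y by rewrite subrK.
    apply: addmx_sub; first exact: submx_trans hl' (addsmxSl K y).
    exact: scalemx_sub (addsmxSr K y).
  have Kinv' : forall h, (K' *m (rho h)^T <= K')%MS.
    move=> h; apply: inv_vec => z /sub_addsmxP [[u1 u2] /= ->].
    rewrite mulmxDl -!mulmxA; apply: addmx_sub.
      exact: submx_trans (submxMl _ _) (submx_trans (Kinv h) (addsmxSl K y)).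
    exact: submx_trans (submxMl _ _) (yT h).
  have K'V : (K' <= V)%MS by rewrite addsmx_sub KV yV.
  have [le eqv] := mxrank_leqif_sup (addsmxSl K y).
  have lt : (\rank K < \rank K')%N.
    rewrite ltn_neqAle le andbT eqv; apply/negP => h; move/negP: ynK; apply.
    exact: submx_trans (addsmxSr K y) h.
  apply: (IH K' Kinv' K'V).
  move: hd; rewrite !leq_subLR => hd; apply: leq_trans hd _.
  by rewrite addnS -addSn leq_add2r.
apply/andP; split; first exact: submx1.
apply: (claim n 0); last by rewrite mxrank0 subn0.
  by move=> g; rewrite mul0mx sub0mx.
exact: sub0mx.
Qed.
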